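(* Let $G$, $\mathcal{D}_G$, $\mathcal{A}_k$ and $\mathcal{Q}(\vec q)$ be as in the context. For every $\vec q\in\mathbb{Z}^c$, the set $\mathcal{Q}(\vec q)$ is either empty or consists of a single point.
   Context: Let $G$ be a finite connected planar graph with $n$ vertices and $m$ edges, such that every edge of $G$ lies on at least one cycle of $G$, and fix a planar embedding of $G$. Let $F_1,\dots,F_c$ ($c=m-n+1$) be the bounded faces of the embedding; each edge borders exactly two faces (possibly one of them the unbounded one). For $k\neq \ell$ let $m_{k\ell}$ be the number of edges bordering both $F_k$ and $F_\ell$, and let $m_k$ be the number of edges bordering $F_k$ and the unbounded face. Define $\mathcal{D}_G=\{\vec\varepsilon\in\mathbb{R}^c: |\varepsilon_k|\le 1 \text{ whenever } m_k>0,\ |\varepsilon_k-\varepsilon_\ell|\le 1\text{ whenever } m_{k\ell}>0\}$, and for $k=1,\dots,c$ the function $\mathcal{A}_k:\mathcal{D}_G\to\mathbb{R}$, $\mathcal{A}_k(\vec\varepsilon)=m_k\arcsin(\varepsilon_k)+\sum_{\ell\neq k}m_{k\ell}\arcsin(\varepsilon_k-\varepsilon_\ell)$ (the sum of the angle differences around the counterclockwise boundary of $F_k$ induced by loop flows $\varepsilon_1,\dots,\varepsilon_c$ on the faces). For $\vec q=(q_1,\dots,q_c)\in\mathbb{Z}^c$ let $\mathcal{Q}(\vec q)=\{\vec\varepsilon\in\mathcal{D}_G:\mathcal{A}_k(\vec\varepsilon)=2\pi q_k\text{ for all }k\}$. *)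

(* Defs.v *)
From HB Require Import structures.
From mathcomp Require Import all_boot all_order all_algebra all_fingroup.
From mathcomp Require Import all_classical all_reals all_analysis.
Set Implicit Arguments. Unset Strict Implicit. Unset Printing Implicit Defensive.
Import Order.TTheory GRing.Theory Num.Theory.

(* ---------- Combinatorial maps (planar embeddings of graphs) ----------
   D : finite set of darts (half-edges); alpha : the involution pairing the two
   darts of an edge; sigma : rotation (cyclic order of darts around each vertex).
   vertices = sigma-orbits, edges = alpha-orbits, faces = phi-orbits, where
   phi = alpha then sigma (the face-tracing permutation). *)
Section Maps.
Variables (D : finType) (alpha sigma : {perm D}).

Definition phi : {perm D} := (alpha * sigma)%g.

Definition vertices := porbits sigma.
Definition edges := porbits alpha.
Definition faces := porbits phi.

Definition is_map := forall d, alpha (alpha d) = d /\ alpha d != d.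

Definition graph_rel : rel D := fun x y => (y \in porbit sigma x) || (y == alpha x).

Definition map_connected := forall x y, connect graph_rel x y.

Definition no_loops := forall d, alpha d \notin porbit sigma d.
Definition no_multi_edges := forall d d',
  d' \in porbit sigma d -> porbit sigma (alpha d) = porbit sigma (alpha d') -> d = d'.

(* genus 0 (Euler's formula V - E + F = 2 for the connected map):
   the rotation system is a planar embedding *)
Definition planar_map := (#|vertices| + #|faces| = #|edges| + 2)%N.

Definition graph_rel_minus (e : {set D}) : rel D :=
  fun x y => (y \in porbit sigma x) || ((y == alpha x) && (x \notin e)).

Definition edge_on_cycle (d : D) := connect (graph_rel_minus (porbit alpha d)) d (alpha d).

Definition every_edge_on_cycle := forall d, edge_on_cycle d.

Definition borders (e f : {set D}) : bool := ~~ [disjoint e & f].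

Definition n_common_edges (f g : {set D}) : nat :=
  #|[set e in edges | borders e f && borders e g]|.

End Maps.

Local Open Scope ring_scope.
Section Flows.
Variables (R : realType) (D : finType) (alpha : {perm D}).
Variables (c : nat) (F : 'I_c -> {set D}) (F0 : {set D}).

Definition mkl (k l : 'I_c) : nat := n_common_edges alpha (F k) (F l).
Definition mk (k : 'I_c) : nat := n_common_edges alpha (F k) F0.

Definition in_DG (eps : 'I_c -> R) : Prop :=
  (forall k, (0 < mk k)%N -> `|eps k| <= 1) /\
  (forall k l, k != l -> (0 < mkl k l)%N -> `|eps k - eps l| <= 1).

Definition A_k (eps : 'I_c -> R) (k : 'I_c) : R :=
  (mk k)%:R * asin (eps k) + \sum_(l < c | l != k) (mkl k l)%:R * asin (eps k - eps l).

Definition Qset (q : 'I_c -> int) (eps : 'I_c -> R) : Prop :=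
  in_DG eps /\ forall k, A_k eps k = 2 * pi * (q k)%:~R.

End Flows.

(* Main.v *)
Require Import Defs.
From HB Require Import structures.
From mathcomp Require Import all_boot all_order all_algebra all_fingroup.
From mathcomp Require Import all_classical all_reals all_analysis.
Import Order.TTheory GRing.Theory Num.Theory.
From mathcomp Require Import lra.
Set Implicit Arguments. Unset Strict Implicit. Unset Printing Implicit Defensive.
Local Open Scope ring_scope.
Lemma asin_lt (R : realType) (x y : R) : `|x| <= 1 -> `|y| <= 1 -> x < y -> asin x < asin y.
Proof.
move=> hx hy xy.
have hx' : -1 <= x <= 1 by rewrite -ler_norml.
have hy' : -1 <= y <= 1 by rewrite -ler_norml.
have [ax sx] := asin_def hx'.
have [ay sy] := asin_def hy'.
rewrite -(@ltr_sin R) ?sx ?sy // in_itv /=; by [].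
Qed.

Lemma term_nonneg (R : realType) (m : nat) (x y : R) :
  (0 < m)%N -> `|x| <= 1 -> `|y| <= 1 -> y <= x ->
  0 <= m%:R * (asin x - asin y) /\ (m%:R * (asin x - asin y) = 0 -> x = y).
Proof.
move=> m0 hx hy yx.
have mp : 0 < m%:R :> R by rewrite ltr0n.
case: (ltrP y x) => yx'.
  have := @asin_lt R _ _ hy hx yx'.
  move=> h; split; first by apply: mulr_ge0; lra.
  move=> /eqP; rewrite mulf_eq0 pnatr_eq0 subr_eq0 => /orP [/eqP m00|/eqP e]; [by rewrite m00 in m0|]; have := @asin_lt R _ _ hy hx yx'; rewrite e; lra.
have -> : x = y by apply/eqP; rewrite eq_le yx' yx.
by rewrite subrr mulr0.
Qed.

Lemma max_step (R : realType) (D : finType) (alpha : {perm D})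
  (c : nat) (F : 'I_c -> {set D}) (F0 : {set D}) (q : 'I_c -> int) (e1 e2 : 'I_c -> R)
  (M : R) (k : 'I_c) :
  Qset alpha F F0 q e1 -> Qset alpha F F0 q e2 -> 0 < M ->
  (forall l, e1 l - e2 l <= M) -> e1 k - e2 k = M ->
  mk alpha F F0 k = 0%N /\ forall l, l != k -> (0 < mkl alpha F k l)%N -> e1 l - e2 l = M.
Proof.
move=> [[D1 D1'] Q1] [[D2 D2'] Q2] M0 Mmax Mk.
have E : A_k alpha F F0 e1 k - A_k alpha F F0 e2 k = 0 by rewrite Q1 Q2 subrr.
rewrite /A_k opprD addrACA -mulrBr -sumrB in E.
set T0 := _ * (_ - _) in E.
have H0 : (0 < mk alpha F F0 k)%N -> 0 <= T0 /\ (T0 = 0 -> e1 k = e2 k).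
  move=> mp; apply: term_nonneg => //; [exact: (D1 k mp)|exact: (D2 k mp)|lra].
have HT : forall l, l != k -> (0 < mkl alpha F k l)%N ->
   0 <= (mkl alpha F k l)%:R * (asin (e1 k - e1 l)) - (mkl alpha F k l)%:R * (asin (e2 k - e2 l))
   /\ ((mkl alpha F k l)%:R * (asin (e1 k - e1 l)) - (mkl alpha F k l)%:R * (asin (e2 k - e2 l)) = 0
       -> e1 k - e1 l = e2 k - e2 l).
  move=> l lk mp; rewrite -mulrBr; apply: term_nonneg => //.
  - by apply: D1' => //; rewrite eq_sym.
  - by apply: D2' => //; rewrite eq_sym.
  - have := Mmax l; lra.
have T0n : 0 <= T0.
  case: (posnP (mk alpha F F0 k)) => [e|mp]; first by rewrite /T0 e mul0r.
  by case: (H0 mp).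
have Tn : forall l, l != k -> 0 <= (mkl alpha F k l)%:R * (asin (e1 k - e1 l)) - (mkl alpha F k l)%:R * (asin (e2 k - e2 l)).
  move=> l lk; case: (posnP (mkl alpha F k l)) => [->|mp]; first by rewrite !mul0r subrr.
  by case: (HT l lk mp).
have Sn : 0 <= \sum_(l < c | l != k) ((mkl alpha F k l)%:R * (asin (e1 k - e1 l)) - (mkl alpha F k l)%:R * (asin (e2 k - e2 l))) by apply: sumr_ge0.
have T00 : T0 = 0 by lra.
have S0 : \sum_(l < c | l != k) ((mkl alpha F k l)%:R * (asin (e1 k - e1 l)) - (mkl alpha F k l)%:R * (asin (e2 k - e2 l))) = 0 by lra.
split.
  case: (posnP (mk alpha F F0 k)) => [//|mp].
  exfalso; have := (H0 mp).2 T00; lra.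
move=> l lk mp.
have := (HT l lk mp).2 (psumr_eq0P Tn S0 lk).
have := Mmax l; lra.
Qed.

Lemma borders_common (D : finType) (alpha : {perm D}) (f g : {set D}) (x : D) :
  x \in f -> alpha x \in g -> (0 < n_common_edges alpha f g)%N.
Proof.
move=> xf ag; rewrite /n_common_edges card_gt0; apply/set0Pn.
exists (porbit alpha x); rewrite inE; apply/andP; split.
  by apply: imset_f.
have ax : alpha x \in porbit alpha x by have := mem_porbit alpha 1 x; rewrite expg1.
apply/andP; split; apply/negP => dis.
  by have := disjointFr dis (porbit_id alpha x); rewrite xf.
by have := disjointFr dis ax; rewrite ag.
Qed.

Lemma le0 (R : realType) (D : finType) (alpha sigma : {perm D})
  (c : nat) (F : 'I_c -> {set D}) (F0 : {set D}) (q : 'I_c -> int) (e1 e2 : 'I_c -> R) :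
  is_map alpha -> map_connected alpha sigma -> F0 \in faces alpha sigma ->
  (forall f, (f \in faces alpha sigma) && (f != F0) <-> exists k, F k = f) ->
  Qset alpha F F0 q e1 -> Qset alpha F F0 q e2 -> forall k, e1 k - e2 k <= 0.
Proof.
move=> Hmap Hconn HF0 HF Q1 Q2 k0.
rewrite leNgt; apply/negP => pos.
pose d := fun l => e1 l - e2 l.
have [k _ kmax] := @arg_maxP _ R 'I_c k0 predT d isT.
pose M := d k.
have Mmax : forall l, e1 l - e2 l <= M := fun l => kmax l isT.
have M0 : 0 < M by have := Mmax k0; rewrite /d /= in pos *; lra.
have faceF : forall l, (F l \in faces alpha sigma) && (F l != F0).
  by move=> l; apply/(HF (F l)); exists l.
pose P := fun x => [exists l, (d l == M) && (x \in F l)].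
have Pphi : forall x, P x -> P (phi alpha sigma x).
  move=> x /existsP[l /andP[dl xl]]; apply/existsP; exists l; rewrite dl /=.
  have /andP[fl _] := faceF l.
  move: fl; rewrite /faces => /imsetP[y _ Fl]; rewrite Fl in xl *.
  rewrite -eq_porbit_mem in xl; rewrite -(eqP xl).
  by have := mem_porbit (phi alpha sigma) 1 x; rewrite expg1.
have Palpha : forall x, P x -> P (alpha x).
  move=> x /existsP[l /andP[/eqP dl xl]].
  have [mk0 adj] := max_step Q1 Q2 M0 Mmax dl.
  pose g := porbit (phi alpha sigma) (alpha x).
  have gf : g \in faces alpha sigma by apply: imset_f.
  have ag : alpha x \in g := porbit_id _ _.
  case: (eqVneq g F0) => [gF0|gnF0].
    exfalso; rewrite gF0 in ag.
    by have := borders_common xl ag; rewrite -/(mk alpha F F0 l) mk0.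
  have [l' Fl'] := (HF g).1 (introT andP (conj gf gnF0)).
  apply/existsP; exists l'; rewrite Fl' ag andbT.
  case: (eqVneq l' l) => [->|nl]; first by rewrite dl.
  apply/eqP; apply: adj => //.
  rewrite -Fl' in ag.
  exact: borders_common xl ag.
have Psigma : forall x, P x -> P (sigma x).
  move=> x Px.
  have -> : sigma x = phi alpha sigma (alpha x) by rewrite /phi permM (Hmap x).1.
  exact/Pphi/Palpha.
have Porb : forall x y, y \in porbit sigma x -> P x -> P y.
  move=> x y /porbitP[i ->] Px; elim: i => [|i IH]; first by rewrite expg0 perm1.
  by rewrite expgSr permM; apply: Psigma.
have Pgr : forall x y, graph_rel alpha sigma x y -> P x -> P y.
  move=> x y /orP[h|/eqP ->]; [exact: Porb h|exact: Palpha].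
have /andP[fk _] := faceF k.
move: fk => /imsetP[z _ Fkz].
have Pz : P z by apply/existsP; exists k; rewrite eqxx Fkz porbit_id.
clear Fkz.
have Pall : forall y, P y.
  move=> y; have /connectP[p pth ->] := Hconn z y.
  elim: p z Pz pth => [//|a p IH] x Px /= /andP[xa pth].
  exact: IH (Pgr _ _ xa Px) pth.
move: HF0 => /imsetP[w _ F0w].
have /existsP[l /andP[_ wl]] := Pall w.
have /andP[fl nl] := faceF l.
move: fl => /imsetP[u _ Flu].
rewrite Flu -eq_porbit_mem in wl.
by rewrite F0w Flu (eqP wl) eqxx in nl.
Qed.

Theorem theorem1 (R : realType) (D : finType) (alpha sigma : {perm D})
  (c : nat) (F : 'I_c -> {set D}) (F0 : {set D}) :
  is_map alpha ->
  map_connected alpha sigma ->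
  no_loops alpha sigma ->
  no_multi_edges alpha sigma ->
  planar_map alpha sigma ->
  every_edge_on_cycle alpha sigma ->
  (* F0 is the unbounded face; F_1..F_c enumerate the bounded faces *)
  F0 \in faces alpha sigma ->
  injective F ->
  (forall f, (f \in faces alpha sigma) && (f != F0) <-> exists k, F k = f) ->
  forall (q : 'I_c -> int) (eps1 eps2 : 'I_c -> R),
    Qset alpha F F0 q eps1 -> Qset alpha F F0 q eps2 -> eps1 = eps2.
Proof.
move=> Hmap Hconn _ _ _ _ HF0 _ HF q e1 e2 Q1 Q2.
apply: funext => k.
have h1 := le0 Hmap Hconn HF0 HF Q1 Q2 k.
have h2 := le0 Hmap Hconn HF0 HF Q2 Q1 k.
lra.
Qed.
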